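(* Let $\mathcal{G}=(G,o,R_1,\ldots,R_n)$ be a functional Menger system of rank $n$ and let $H$ be a nonempty subset of $G$. Then $H$ is a stabilizer of $\mathcal{G}$ if and only if $H$ is a quasi-stable, $l$-unitary normal $v$-complex such that $R_iH\subseteq H$ for every $i\in\{1,\ldots,n\}$ and for all $x,y,u\in G$, $\bar w\in G^n$, $i\in\{1,\ldots,n\}$: if $x=y[R_1x\ldots R_nx]\in C_H[H]$ and $u[\bar w\,|_iy]\in H$, then $u[\bar w\,|_ix]\in H$, where the prefix $u[\bar w\,|_i\ ]$ is also allowed to be empty (i.e. the implication is also required with $u[\bar w\,|_iy]$ replaced by $y$ and $u[\bar w\,|_ix]$ by $x$).
   Context: A functional Menger system of rank $n$ is a nonempty set $G$ with an $(n+1)$-ary operation $o\colon(x_0,x_1,\ldots,x_n)\mapsto x_0[x_1\ldots x_n]$ and unary operations $R_1,\ldots,R_n$ satisfying, for all $i,k\in\{1,\ldots,n\}$ and all elements: (A1) $x[y_1\ldots y_n][z_1\ldots z_n]=x[y_1[z_1\ldots z_n]\ldots y_n[z_1\ldots z_n]]$; (A2) $x[R_1x\ldots R_nx]=x$; (A3) $x[\bar u\,|_iz][R_1y\ldots R_ny]=x[\bar u\,|_iz[R_1y\ldots R_ny]]$; (A4) $R_ix[R_1y\ldots R_ny]=(R_ix)[R_1y\ldots R_ny]$; (A5) $x[R_1y\ldots R_ny][R_1z\ldots R_nz]=x[R_1z\ldots R_nz][R_1y\ldots R_ny]$; (A6) $R_ix[y_1\ldots y_n]=R_i(R_kx)[y_1\ldots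 y_n]$; (A7) $(R_ix)[y_1\ldots y_n]=y_i[R_1(x[y_1\ldots y_n])\ldots R_n(x[y_1\ldots y_n])]$. Here $x[\bar u\,|_iz]$ denotes $x[u_1\ldots u_{i-1}\,z\,u_{i+1}\ldots u_n]$, and $R_ix[\ldots]$ means $R_i(x[\ldots])$. For a set $A$, $\mathcal F(A^n,A)$ is the set of partial maps $A^n\to A$. The Menger composition $f[g_1\ldots g_n]$ is the partial function $\bar a\mapsto f(g_1(\bar a),\ldots,g_n(\bar a))$ (defined exactly when the right side is defined), and $\mathcal R_if$ is the partial function with the same domain as $f$ given by $(a_1,\ldots,a_n)\mapsto a_i$. A representation of $\mathcal G$ by $n$-place functions on a set $A$ is a map $P\colon G\to\mathcal F(A^n,A)$ with $P(x[y_1\ldots y_n])=P(x)[P(y_1)\ldots P(y_n)]$ and $P(R_ix)=\mathcal R_iP(x)$. A nonempty $H\subseteq G$ is a stabilizer of $\mathcal G$ if there exist such a representation $P$ on some set $A$ and a point $a\in A$ with $H=\{g\in G: P(g)(a,\ldots,a)=a\}$. $T_n(G)$ is the smallest set of maps $G\to G$ containing the identity and closed under $t\mapsto (x\mapsto a[\bar b\,|_it(x)])$ and $t\mapsto(x\mapsto R_it(x))$ for all $a\in G$, $\bar b\in G^n$, $i$. A nonempty $H\subseteq G$ is quasi-stable if $x\in H\Rightarrow x[x\ldots x]\in H$; $l$-unitary if $x[y\ldots y]\in H$ and $y\in H$ imply $x\in H$; a normal $v$-complex if $x,y\in H$ and $t(x)\in H$ imply $t(y)\in H$ for all $x,y\in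 G$, $t\in T_n(G)$. Write $x\le y$ iff $x=y[R_1x\ldots R_nx]$, and $x\sqsubset y$ iff $R_1x\le R_1y$ (equivalently $x[R_1y\ldots R_ny]=x$). For $X\subseteq G$, let $C_H(X)$ be the set of all $c\in G$ for which there exist $a,b\in G$ and $t\in T_n(G)$ with ($a\le b$ or $a,b\in H$), $t(a)[R_1c\ldots R_nc]=t(a)$, $a\in X$ and $t(b)\in X$. Put $C_H^0(X)=X$, $C_H^{m+1}(X)=C_H(C_H^m(X))$ and $C_H[X]=\bigcup_{m\ge 0}C_H^m(X)$. *)

(* Defs.v *)
From mathcomp Require Import all_boot.
Set Implicit Arguments. Unset Strict Implicit. Unset Printing Implicit Defensive.

(* A Menger system of rank n on carrier G:
   o x ys  stands for  x[ys_1 ... ys_n]   (ys : {ffun 'I_n -> G}),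
   R i x   stands for  R_{i+1} x          (indices 1..n are 'I_n = 0..n-1). *)

Section Menger.
Variables (G : Type) (n : nat).
Variable o : G -> {ffun 'I_n -> G} -> G.
Variable R : 'I_n -> G -> G.

Definition Rt (y : G) : {ffun 'I_n -> G} := [ffun i => R i y].
Definition upd (u : {ffun 'I_n -> G}) (i : 'I_n) (z : G) : {ffun 'I_n -> G} :=
  [ffun j => if j == i then z else u j].
Definition cst (y : G) : {ffun 'I_n -> G} := [ffun _ => y].

Definition functional_Menger : Prop :=
  (forall x y z, o (o x y) z = o x [ffun j => o (y j) z]) /\
  (forall x, o x (Rt x) = x) /\
  (forall x u i z y, o (o x (upd u i z)) (Rt y) = o x (upd u i (o z (Rt y)))) /\
  (forall i x y, R i (o x (Rt y)) = o (R i x) (Rt y)) /\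
  (forall x y z, o (o x (Rt y)) (Rt z) = o (o x (Rt z)) (Rt y)) /\
  (forall i k x ys, R i (o x ys) = R i (o (R k x) ys)) /\
  (forall i x ys, o (R i x) ys = o (ys i) (Rt (o x ys))).

(* Representations by partial n-place functions on A; a partial map
   A^n -> A is  {ffun 'I_n -> A} -> option A. *)
Definition is_representation (A : Type) (P : G -> {ffun 'I_n -> A} -> option A) : Prop :=
  (forall x ys (a : {ffun 'I_n -> A}) (c : A),
      P (o x ys) a = Some c <->
      exists bs : {ffun 'I_n -> A},
        (forall i, P (ys i) a = Some (bs i)) /\ P x bs = Some c) /\
  (forall i x (a : {ffun 'I_n -> A}),
      P (R i x) a = match P x a with Some _ => Some (a i) | None => None end).

Definition stabilizer (H : G -> Prop) : Prop :=
  (exists h, H h) /\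
  exists (A : Type) (P : G -> {ffun 'I_n -> A} -> option A) (a : A),
    is_representation P /\
    forall g, H g <-> P g [ffun _ => a] = Some a.

Inductive Tn : (G -> G) -> Prop :=
  | Tn_id : Tn (fun x => x)
  | Tn_sub (a : G) (b : {ffun 'I_n -> G}) (i : 'I_n) (t : G -> G) :
      Tn t -> Tn (fun x => o a (upd b i (t x)))
  | Tn_R (i : 'I_n) (t : G -> G) : Tn t -> Tn (fun x => R i (t x)).

Definition quasi_stable (H : G -> Prop) : Prop :=
  forall x, H x -> H (o x (cst x)).
Definition l_unitary (H : G -> Prop) : Prop :=
  forall x y, H (o x (cst y)) -> H y -> H x.
Definition normal_v_complex (H : G -> Prop) : Prop :=
  forall x y t, Tn t -> H x -> H y -> H (t x) -> H (t y).

Definition mle (x y : G) : Prop := x = o y (Rt x).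

Definition CH (H X : G -> Prop) (c : G) : Prop :=
  exists a b t, (mle a b \/ (H a /\ H b)) /\ Tn t /\
    o (t a) (Rt c) = t a /\ X a /\ X (t b).

Fixpoint CHm (H : G -> Prop) (m : nat) (X : G -> Prop) : G -> Prop :=
  match m with
  | 0 => X
  | m'.+1 => CH H (CHm H m' X)
  end.

Definition CHcl (H X : G -> Prop) (c : G) : Prop := exists m, CHm H m X c.

End Menger.

(* Main.v *)
From Stdlib Require Import ClassicalEpsilon PropExtensionality FunctionalExtensionality.
Require Import Defs.
From mathcomp Require Import all_boot.
Set Implicit Arguments. Unset Strict Implicit. Unset Printing Implicit Defensive.

Section Alg.
Variables (G : Type) (n : nat) (o : G -> {ffun 'I_n -> G} -> G) (R : 'I_n -> G -> G).
Hypothesis A1 : forall x y z, o (o x y) z = o x [ffun j => o (y j) z].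
Hypothesis A2 : forall x, o x (Rt R x) = x.
Hypothesis A3 : forall x u i z y, o (o x (upd u i z)) (Rt R y) = o x (upd u i (o z (Rt R y))).
Hypothesis A4 : forall i x y, R i (o x (Rt R y)) = o (R i x) (Rt R y).
Hypothesis A5 : forall x y z, o (o x (Rt R y)) (Rt R z) = o (o x (Rt R z)) (Rt R y).
Hypothesis A6 : forall i k x ys, R i (o x ys) = R i (o (R k x) ys).
Hypothesis A7 : forall i x ys, o (R i x) ys = o (ys i) (Rt R (o x ys)).

Definition sq x y := o x (Rt R y) = x.

Lemma upd_at (u : {ffun 'I_n -> G}) i z : upd u i z i = z.
Proof. by rewrite /upd ffunE eqxx. Qed.

Lemma upd_self (u : {ffun 'I_n -> G}) i : upd u i (u i) = u.
Proof. apply/ffunP=> j; rewrite /upd ffunE; by case: eqP => [->|]. Qed.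

Lemma RR i k x : R i (R k x) = R i x.
Proof.
have E : o (R k x) (Rt R x) = R k x by rewrite -A4 A2.
by rewrite -{2}(A2 x) (A6 i k) E.
Qed.

Lemma Rt_RR k x : Rt R (R k x) = Rt R x.
Proof. by apply/ffunP=> j; rewrite !ffunE RR. Qed.

Lemma RtRt c : [ffun j => o (Rt R c j) (Rt R c)] = Rt R c.
Proof. by apply/ffunP=> j; rewrite !ffunE -A4 A2. Qed.

Lemma restr_idem q c : o (o q (Rt R c)) (Rt R c) = o q (Rt R c).
Proof. by rewrite A1 RtRt. Qed.

Lemma Rt_restr z c : Rt R (o z (Rt R c)) = [ffun k => o (R k z) (Rt R c)].
Proof. by apply/ffunP=> j; rewrite !ffunE A4. Qed.

Lemma restr_le z c : mle o R (o z (Rt R c)) z.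
Proof.
rewrite /mle Rt_restr.
have -> : [ffun k => o (R k z) (Rt R c)] = [ffun k => o (Rt R z k) (Rt R c)].
  by apply/ffunP=> j; rewrite !ffunE.
by rewrite -A1 A2.
Qed.

Lemma le_sq x y : mle o R x y -> sq x y.
Proof.
rewrite /mle /sq => E.
have -> : o x (Rt R y) = o (o y (Rt R x)) (Rt R y) by rewrite -E.
by rewrite A5 A2 -E.
Qed.

Lemma sq_trans f e x : sq f e -> sq e x -> sq f x.
Proof.
rewrite /sq => Hf He.
rewrite -{1}Hf A1.
have -> : [ffun j => o (Rt R e j) (Rt R x)] = Rt R e.
  by apply/ffunP=> j; rewrite !ffunE -A4 He.
exact: Hf.
Qed.

Lemma comp_sq g (ys : {ffun 'I_n -> G}) i : sq (o g ys) (ys i).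
Proof.
rewrite /sq; set q := o g ys.
have E1 : Rt R q = [ffun k => o (R k (ys i)) (Rt R q)].
  apply/ffunP=> k; by rewrite !ffunE /q (A6 k i) A7 A4.
have E2 : o (o q (Rt R (ys i))) (Rt R q) = q.
  rewrite A1.
  have -> : [ffun j => o (Rt R (ys i) j) (Rt R q)] = Rt R q.
    apply/ffunP=> j; have := congr1 (fun f : {ffun 'I_n -> G} => f j) E1; rewrite !ffunE => ->.
    by [].
  by rewrite A2.
by rewrite -{1}(A2 q) A5 E2.
Qed.

Lemma mono t x y : Tn o R t -> mle o R x y -> mle o R (t x) (t y).
Proof.
move=> Ht Hxy; elim: Ht => [|a b i t' Ht' IH|j t' Ht' IH] //=.
- rewrite /mle in IH *.
  set x' := t' x in IH *; set y' := t' y in IH *.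
  set e := o a (upd b i x').
  have Hs : sq e x' by rewrite /e -{2}(upd_at b i x'); exact: comp_sq.
  have Hs2 : sq (o y' (Rt R e)) x' by apply: sq_trans Hs; exact: restr_idem.
  have Ex : o x' (Rt R e) = o y' (Rt R e).
    by rewrite {1}IH A5; exact: Hs2.
  by rewrite A3 -Ex -A3 A2.
- rewrite /mle in IH *.
  by rewrite Rt_RR {1}IH A4.
Qed.

Lemma Tn_comp t s : Tn o R t -> Tn o R s -> Tn o R (fun x => t (s x)).
Proof.
move=> Ht Hs; elim: Ht => [|a b i t' Ht' IH|j t' Ht' IH] /=.
- exact: Hs.
- exact: (Tn_sub a b i IH).
- exact: (Tn_R j IH).
Qed.

Lemma Tn_slot g (u : {ffun 'I_n -> G}) i : Tn o R (fun z => o g (upd u i z)).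
Proof. exact: (Tn_sub g u i (Tn_id o R)). Qed.


Hypothesis hn : (0 < n)%N.
Variable H : G -> Prop.
Hypothesis QS : quasi_stable o H.
Hypothesis LU : l_unitary o H.
Hypothesis NVC : normal_v_complex o R H.
Hypothesis RC : forall i x, H x -> H (R i x).
Hypothesis COND : forall (x y u : G) (w : {ffun 'I_n -> G}) (i : 'I_n),
      x = o y (Rt R x) -> CHcl o R H H x ->
      (H (o u (upd w i y)) -> H (o u (upd w i x))) /\ (H y -> H x).

Lemma replace_all g (us : {ffun 'I_n -> G}) h :
  H (o g us) -> (forall j, H (us j)) -> H h -> H (o g (cst n h)).
Proof.
move=> Hg Hus Hh.
have step : forall k : nat, H (o g [ffun j : 'I_n => if (j < k)%N then h else us j]).
  elim=> [|k IH].
    have -> : [ffun j : 'I_n => if (j < 0)%N then h else us j] = us.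
      by apply/ffunP=> j; rewrite ffunE.
    exact: Hg.
  case: (ltnP k n) => Hk.
  - set F := [ffun j : 'I_n => if (j < k)%N then h else us j] in IH.
    pose j0 := Ordinal Hk.
    have E1 : F = upd F j0 (us j0).
      apply/ffunP=> j; rewrite /upd !ffunE; case: eqP => [->|] //=.
      by rewrite ltnn.
    have E2 : [ffun j : 'I_n => if (j < k.+1)%N then h else us j] = upd F j0 h.
      apply/ffunP=> j; rewrite /upd !ffunE; case: eqP => [->|/eqP Hne] /=.
        by rewrite ltnSn.
      rewrite ltnS leq_eqVlt.
      have -> : (nat_of_ord j == k) = false.
        by apply/negbTE; apply: contra Hne => /eqP E; apply/eqP/val_inj.
      by [].
    rewrite E2.
    apply: (NVC (t := fun z => o g (upd F j0 z)) (x := us j0)) => //.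
      exact: Tn_slot.
    by rewrite -E1.
  - have -> : [ffun j : 'I_n => if (j < k.+1)%N then h else us j]
            = [ffun j : 'I_n => if (j < k)%N then h else us j].
      apply/ffunP=> j; rewrite !ffunE.
      have -> : (j < k)%N by apply: leq_trans (ltn_ord j) Hk.
      by have -> : (j < k.+1)%N by apply: leq_trans (ltn_ord j) _; rewrite ltnW.
    exact: IH.
have := step n.
have -> : [ffun j : 'I_n => if (j < n)%N then h else us j] = cst n h.
  by apply/ffunP=> j; rewrite !ffunE ltn_ord.
by [].
Qed.

Lemma upH x y : mle o R x y -> H x -> H y.
Proof.
rewrite /mle => E Hx.
apply: (LU (y := x)) => //.
apply: (replace_all (us := Rt R x)); rewrite -?E // => j.
rewrite ffunE; exact: RC.
Qed.

Definition K := CHcl o R H H.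

Lemma CH_incl (X : G -> Prop) c : X c -> CH o R H X c.
Proof.
move=> Xc; exists c, c, (fun x => x); split.
  by left; rewrite /mle A2.
by split; [exact: Tn_id | split; [exact: A2 | split]].
Qed.

Lemma CHm_le m m' c : (m <= m')%N -> CHm o R H m H c -> CHm o R H m' H c.
Proof.
move=> Hm; elim: m' Hm => [|m' IH]; first by rewrite leqn0 => /eqP ->.
rewrite leq_eqVlt => /orP [/eqP -> //| Hlt] Hc.
by apply: CH_incl; apply: IH.
Qed.

Lemma K_H x : H x -> K x.
Proof. by exists 0. Qed.

Lemma K_rule a b t c : (mle o R a b \/ (H a /\ H b)) -> Tn o R t ->
  o (t a) (Rt R c) = t a -> K a -> K (t b) -> K c.
Proof.
move=> Hab Ht Hc [m1 H1] [m2 H2].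
exists (maxn m1 m2).+1 => /=.
exists a, b, t; do 4 split => //.
  by apply: CHm_le H1; apply: leq_maxl.
by apply: CHm_le H2; apply: leq_maxr.
Qed.

Lemma K_sq e c : K e -> sq e c -> K c.
Proof.
move=> Ke Hs; apply: (@K_rule e e (fun x => x)) => //.
  by left; rewrite /mle A2.
exact: Tn_id.
Qed.

Lemma K_down x y t : mle o R x y -> K x -> Tn o R t -> K (t y) -> K (t x).
Proof. move=> Hxy Kx Ht Kty; apply: (K_rule (or_introl Hxy) Ht) => //; exact: A2. Qed.

Lemma K_HH x y t : H x -> H y -> Tn o R t -> K (t y) -> K (t x).
Proof. move=> Hx Hy Ht Kty; apply: (K_rule (or_intror (conj Hx Hy)) Ht) => //; try exact: A2; exact: K_H. Qed.

Lemma K_comp g (ys : {ffun 'I_n -> G}) i : K (o g ys) -> K (ys i).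
Proof. move=> K1; apply: K_sq K1 _; exact: comp_sq. Qed.

Definition eqv x y := K x /\ forall t, Tn o R t -> (H (t x) <-> H (t y)) /\ (K (t x) <-> K (t y)).

Lemma eqv_K2 x y : eqv x y -> K y.
Proof. by case=> Kx /(_ _ (Tn_id o R)) [_ /= [E _]]; apply: E. Qed.

Lemma eqv_refl x : K x -> eqv x x.
Proof. by split. Qed.

Lemma eqv_sym x y : eqv x y -> eqv y x.
Proof.
move=> E; split; first exact: eqv_K2 E.
by move=> t Ht; case: E => _ /(_ t Ht) [E1 E2]; split; symmetry.
Qed.

Lemma eqv_trans x y z : eqv x y -> eqv y z -> eqv x z.
Proof.
move=> [Kx E1] [Ky E2]; split => // t Ht.
case: (E1 t Ht) => [a1 b1]; case: (E2 t Ht) => [a2 b2].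
by split; [rewrite a1 | rewrite b1].
Qed.

Lemma eqv_ctx x y s : eqv x y -> Tn o R s -> K (s x) -> eqv (s x) (s y).
Proof.
move=> [Kx E] Hs Ksx; split => // t Ht.
exact: (E (fun z => t (s z)) (Tn_comp Ht Hs)).
Qed.

Lemma eqv_HH x y : H x -> H y -> eqv x y.
Proof.
move=> Hx Hy; split; first exact: K_H.
move=> t Ht; split; split.
- by move=> Htx; apply: (NVC Ht Hx).
- by move=> Hty; apply: (NVC Ht Hy).
- exact: (K_HH Hy Hx Ht).
- exact: (K_HH Hx Hy Ht).
Qed.

Lemma transfer x y : mle o R x y -> K x -> eqv x y.
Proof.
move=> Hxy Kx; split => // t Ht; split; split.
- move=> Htx; apply: upH Htx; exact: mono.
- destruct Ht as [|a b i t' Ht'|j t' Ht']; simpl.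
  + exact (proj2 (@COND x y x (Rt R x) (Ordinal hn) Hxy Kx)).
  + move=> Hy'.
    have Kt'y : K (t' y).
      by have := @K_comp a (upd b i (t' y)) i (K_H Hy'); rewrite upd_at.
    have Kt'x := K_down Hxy Kx Ht' Kt'y.
    exact: (proj1 (@COND _ _ a b i (mono Ht' Hxy) Kt'x) Hy').
  + move=> Hy'.
    have Ht2 := Tn_R j Ht'.
    exact: (proj2 (@COND _ _ x (Rt R x) (Ordinal hn) (mono Ht2 Hxy) (K_down Hxy Kx Ht2 (K_H Hy'))) Hy').
- move=> Ktx; apply: K_sq Ktx _; apply: le_sq; exact: mono.
- exact: K_down.
Qed.

Lemma eqv_H x y : eqv x y -> H x -> H y.
Proof. by case=> _ /(_ _ (Tn_id o R)) [/= [E _] _]. Qed.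

Lemma WD g (xs xs' : {ffun 'I_n -> G}) :
  (forall i, eqv (xs i) (xs' i)) -> K (o g xs) -> eqv (o g xs) (o g xs').
Proof.
move=> E Kg.
pose mix (k : nat) := [ffun j : 'I_n => if (j < k)%N then xs' j else xs j].
have step : forall k : nat, eqv (o g xs) (o g (mix k)).
  elim=> [|k IH].
    have -> : mix 0 = xs by apply/ffunP=> j; rewrite ffunE.
    exact: eqv_refl.
  case: (ltnP k n) => Hk.
  - pose j0 := Ordinal Hk.
    have E1 : mix k = upd (mix k) j0 (xs j0).
      apply/ffunP=> j; rewrite /upd !ffunE; case: eqP => [->|] //=.
      by rewrite ltnn.
    have E2 : mix k.+1 = upd (mix k) j0 (xs' j0).
      apply/ffunP=> j; rewrite /upd !ffunE; case: eqP => [->|/eqP Hne] /=.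
        by rewrite ltnSn.
      rewrite ltnS leq_eqVlt.
      have -> : (nat_of_ord j == k) = false.
        by apply/negbTE; apply: contra Hne => /eqP E'; apply/eqP/val_inj.
      by [].
    apply: (eqv_trans IH).
    rewrite E2 {1}E1.
    apply: (@eqv_ctx _ _ (fun z => o g (upd (mix k) j0 z))) => //.
      exact: Tn_slot.
    rewrite -E1; exact: eqv_K2 IH.
  - have -> : mix k.+1 = mix k.
      apply/ffunP=> j; rewrite !ffunE.
      have -> : (j < k)%N by apply: leq_trans (ltn_ord j) Hk.
      by have -> : (j < k.+1)%N by apply: leq_trans (ltn_ord j) _; rewrite ltnW.
    exact: IH.
have -> : xs' = mix n by apply/ffunP=> j; rewrite ffunE ltn_ord.
exact: step.
Qed.

Variable h0 : G.
Hypothesis Hh0 : H h0.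

Definition cls x := fun y => eqv x y.
Definition rep x := epsilon (inhabits h0) (cls x).

Lemma rep_spec x : K x -> eqv x (rep x).
Proof. move=> Kx; apply: (epsilon_spec (inhabits h0) (cls x)); exists x; exact: eqv_refl. Qed.

Lemma rep_eq x y : eqv x y -> rep x = rep y.
Proof.
move=> E; rewrite /rep.
have -> : cls x = cls y.
  apply: functional_extensionality => z; apply: propositional_extensionality.
  split => Hz; first exact: eqv_trans (eqv_sym E) Hz.
  exact: eqv_trans E Hz.
by [].
Qed.

Lemma rep_eqv x y : K x -> K y -> rep x = rep y -> eqv x y.
Proof.
move=> Kx Ky E.
apply: eqv_trans (rep_spec Kx) _; rewrite E; apply: eqv_sym; exact: rep_spec.
Qed.

Definition valid (s xs : {ffun 'I_n -> G}) := forall i, K (xs i) /\ s i = rep (xs i).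
Definition Pr g s c := exists xs, valid s xs /\ K (o g xs) /\ c = rep (o g xs).

Lemma valid_eqv s xs xs' : valid s xs -> valid s xs' -> forall i, eqv (xs i) (xs' i).
Proof.
move=> V1 V2 i; have [K1 E1] := V1 i; have [K2 E2] := V2 i.
by apply: rep_eqv => //; rewrite -E1 -E2.
Qed.

Lemma Pr_uniq g s c c' : Pr g s c -> Pr g s c' -> c = c'.
Proof.
move=> [xs [V1 [K1 ->]]] [xs' [V2 [K2 ->]]].
apply: rep_eq; apply: WD K1; exact: valid_eqv V1 V2.
Qed.

Definition Pf g s : option G :=
  match excluded_middle_informative (exists c, Pr g s c) with
  | left e => Some (proj1_sig (constructive_indefinite_description _ e))
  | right _ => None
  end.

Lemma Pf_some g s c : Pf g s = Some c <-> Pr g s c.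
Proof.
rewrite /Pf; case: excluded_middle_informative => [e|ne].
  case: constructive_indefinite_description => c0 Hc0 /=.
  split; first by case=> <-.
  by move=> Hc; congr Some; exact: Pr_uniq Hc0 Hc.
split => // Hc; exfalso; apply: ne; by exists c.
Qed.

Lemma Pf_rep : is_representation o R Pf.
Proof.
split.
- move=> x ys s c; split.
  + move=> /Pf_some [xs [Hv [K1 ->]]].
    rewrite A1 in K1 *.
    set zs := [ffun j => o (ys j) xs] in K1 *.
    have Kz : forall j, K (zs j) by move=> j; exact: K_comp K1.
    exists [ffun j => rep (zs j)]; split.
      move=> i; apply/Pf_some; exists xs; split => //; rewrite ffunE; split.
        by have := Kz i; rewrite /zs ffunE.
      by rewrite /zs ffunE.
    apply/Pf_some; exists zs; split => //.
    by move=> i; split; [exact: Kz | rewrite !ffunE].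
  + move=> [bs [Hb Hx]].
    have [xs0 [Hv0 [K0 E0]]] := (Pf_some _ _ _).1 (Hb (Ordinal hn)).
    have Hi : forall i, K (o (ys i) xs0) /\ bs i = rep (o (ys i) xs0).
      move=> i; have [xsi [Hvi [Ki Ei]]] := (Pf_some _ _ _).1 (Hb i).
      have E := WD (valid_eqv Hvi Hv0) Ki.
      split; [exact: eqv_K2 E | rewrite Ei; exact: rep_eq E].
    have [zs [Hvz [Kz ->]]] := (Pf_some _ _ _).1 Hx.
    have Ezw : forall j, eqv (zs j) ([ffun j => o (ys j) xs0] j).
      move=> j; rewrite ffunE; have [Kzj Ej] := Hvz j.
      apply: rep_eqv => //; first exact: (Hi j).1.
      by rewrite -Ej (Hi j).2.
    have E := WD Ezw Kz.
    apply/Pf_some; exists xs0; split => //; rewrite A1.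
    split; [exact: eqv_K2 E | exact: rep_eq E].
- move=> i x s; case E: (Pf x s) => [c|].
  + have [xs [Hv [Kx' _]]] := (Pf_some _ _ _).1 E.
    apply/Pf_some; exists xs; split => //.
    rewrite A7; set q := o x xs; have [Kxi Ei] := Hv i.
    have Hs : sq q (o (xs i) (Rt R q)).
      rewrite /sq Rt_restr.
      have -> : [ffun k => o (R k (xs i)) (Rt R q)] = [ffun k => o (Rt R (xs i) k) (Rt R q)].
        by apply/ffunP=> j; rewrite !ffunE.
      by rewrite -A1 /q comp_sq A2.
    have Kw := K_sq Kx' Hs.
    split => //; rewrite Ei; apply: rep_eq; apply: eqv_sym; apply: transfer Kw.
    exact: restr_le.
  + case E2: (Pf (R i x) s) => [c|] //; exfalso.
    have [xs [Hv [Kr _]]] := (Pf_some _ _ _).1 E2.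
    rewrite A7 in Kr.
    have Kq : K (o x xs) by apply: K_sq Kr _; exact: restr_idem.
    have : Pf x s = Some (rep (o x xs)) by apply/Pf_some; exists xs.
    by rewrite E.
Qed.

Lemma suff_stab : stabilizer o R H.
Proof.
split; first by exists h0.
exists G, Pf, (rep h0); split; first exact: Pf_rep.
move=> g; split.
- move=> Hg; apply/Pf_some; exists (cst n g); split.
    move=> i; rewrite !ffunE; split; first exact: K_H Hg.
    by apply: rep_eq; exact: eqv_HH.
  split; first exact: K_H (QS Hg).
  by apply: rep_eq; apply: eqv_HH => //; exact: QS.
- move=> /Pf_some [xs [Hv [Kg E]]].
  have Ex : forall i, eqv (xs i) (cst n h0 i).
    move=> i; have [Ki Ei] := Hv i; rewrite ffunE in Ei; rewrite /cst ffunE.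
    by apply: eqv_sym; apply: rep_eqv => //; exact: K_H.
  have E2 := WD Ex Kg.
  have Hgx : H (o g xs) by apply: eqv_H Hh0; apply: rep_eqv => //; exact: K_H.
  exact: LU (eqv_H E2 Hgx) Hh0.
Qed.

End Alg.

Section Nec.
Variables (G : Type) (n : nat) (o : G -> {ffun 'I_n -> G} -> G) (R : 'I_n -> G -> G).
Variables (A : Type) (P : G -> {ffun 'I_n -> A} -> option A) (a : A).
Hypothesis hn : (0 < n)%N.
Hypothesis HP : is_representation o R P.
Variable H : G -> Prop.
Hypothesis HH : forall g, H g <-> P g [ffun _ => a] = Some a.

Lemma opt_ext (u v : option A) : (forall c, u = Some c <-> v = Some c) -> u = v.
Proof.
case: u => [c|]; case: v => [d|] // E.
- by apply/esym/(E c).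
- by have := (E c).1 erefl.
- by have := (E d).2 erefl.
Qed.

Lemma ctx_dep t x y : Tn o R t -> P x [ffun _ => a] = P y [ffun _ => a] ->
  P (t x) [ffun _ => a] = P (t y) [ffun _ => a].
Proof.
move=> Ht Exy; elim: Ht => [|a' b i t' Ht' IH|j t' Ht' IH] //=.
- apply: opt_ext => c; rewrite !(HP.1); split; move=> [bs [Hb Hc]]; exists bs; split => // j;
  have := Hb j; rewrite /upd !ffunE; case: eqP => _ //; by rewrite IH.
- by rewrite !(HP.2) IH.
Qed.

Lemma le_val x y : x = o y (Rt R x) -> (exists c, P x [ffun _ => a] = Some c) ->
  P y [ffun _ => a] = P x [ffun _ => a].
Proof.
move=> E [c Hc].
have : P (o y (Rt R x)) [ffun _ => a] = Some c by rewrite -E.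
move=> /(HP.1) [bs [Hb Hy]].
have Ebs : bs = [ffun _ => a].
  apply/ffunP => j; have := Hb j; rewrite ffunE (HP.2) Hc => [[<-]].
  by rewrite ffunE.
by rewrite Ebs in Hy; rewrite Hy Hc.
Qed.

Lemma CH_def m c : CHm o R H m H c -> exists d, P c [ffun _ => a] = Some d.
Proof.
elim: m c => [|m IH] c /=.
  by move=> /HH Hc; exists a.
move=> [a' [b' [t [Hab [Ht [Ec [Xa Xtb]]]]]]].
have Da := IH _ Xa; have Dtb := IH _ Xtb.
have Eab : P a' [ffun _ => a] = P b' [ffun _ => a].
  case: Hab => [Hle | [/HH H1 /HH H2]]; last by rewrite H1 H2.
  by rewrite (le_val Hle Da).
have [d Hd] : exists d, P (t a') [ffun _ => a] = Some d by rewrite (ctx_dep Ht Eab).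
have : P (o (t a') (Rt R c)) [ffun _ => a] = Some d by rewrite Ec.
move=> /(HP.1) [bs [Hb _]].
have := Hb (Ordinal hn); rewrite ffunE (HP.2).
case: (P c [ffun _ => a]) => [e|] // _; by exists e.
Qed.

Lemma nec :
  (quasi_stable o H /\ l_unitary o H /\ normal_v_complex o R H /\
   (forall i x, H x -> H (R i x)) /\
   (forall (x y u : G) (w : {ffun 'I_n -> G}) (i : 'I_n),
      x = o y (Rt R x) -> CHcl o R H H x ->
      (H (o u (upd w i y)) -> H (o u (upd w i x))) /\ (H y -> H x))).
Proof.
split; [|split; [|split; [|split]]].
- move=> x /HH Hx; apply/HH; apply/(HP.1); exists [ffun _ => a]; split => // j.
  by rewrite /cst !ffunE.
- move=> x y /HH /(HP.1) [bs [Hb Hx]] /HH Hy; apply/HH.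
  have Ebs : bs = [ffun _ => a].
    apply/ffunP => j; have := Hb j; rewrite /cst ffunE Hy => [[<-]].
    by rewrite ffunE.
  by rewrite -Ebs.
- move=> x y t Ht /HH Hx /HH Hy /HH Htx; apply/HH.
  by rewrite -(ctx_dep (x := x) Ht) // Hx Hy.
- by move=> i x /HH Hx; apply/HH; rewrite (HP.2) Hx ffunE.
- move=> x y u w i E [m Hm].
  have Ey := le_val E (CH_def Hm).
  split.
  + move=> /HH Hu; apply/HH; rewrite -Hu.
    by apply: (ctx_dep (t := fun z => o u (upd w i z))); [exact: Tn_slot | rewrite Ey].
  + by move=> /HH Hy; apply/HH; rewrite -Ey.
Qed.

End Nec.

Theorem theorem2 (G : Type) (n : nat) (hn : 0 < n)
  (o : G -> {ffun 'I_n -> G} -> G) (R : 'I_n -> G -> G)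
  (HM : functional_Menger o R)
  (H : G -> Prop) (Hne : exists h, H h) :
  stabilizer o R H <->
  (quasi_stable o H /\ l_unitary o H /\ normal_v_complex o R H /\
   (forall i x, H x -> H (R i x)) /\
   (forall (x y u : G) (w : {ffun 'I_n -> G}) (i : 'I_n),
      x = o y (Rt R x) -> CHcl o R H H x ->
      (H (o u (upd w i y)) -> H (o u (upd w i x))) /\ (H y -> H x))).
Proof.
have [A1 [A2 [A3 [A4 [A5 [A6 A7]]]]]] := HM.
split.
- move=> [_ [A [P [a [Hrep HH]]]]].
  exact: (nec hn Hrep HH).
- move=> [QS [LU [NVC [RC COND]]]].
  have [h0 Hh0] := Hne.
  eapply suff_stab; eassumption.
Qed.
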